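(* Let $\mathbf X=\{X_n\}_{n\ge1}$ and $\mathbf Y=\{Y_n\}_{n\ge1}$ be general sources. Suppose that $$\text{for every }\gamma\in\mathbb R:\qquad \lim_{n\to\infty}\mu\big(\{\delta\in[0,1): c_n^x(\delta)-c_n^y(\delta)<\gamma\}\big)=0$$ (equivalently, $\mu\text{-}\liminf_{n\to\infty}\{c_n^x(\delta)-c_n^y(\delta)\}=\infty$). Then $\mathbf X$ is an approximating source for $\mathbf Y$.
   Context: Logarithms are natural. A general source $\mathbf X=\{X_n\}_{n\ge1}$ is a sequence of random variables, $X_n$ taking values in a countable set $\mathcal X_n$, with no consistency requirements between different $n$. Similarly $Y_n$ takes values in a countable set $\mathcal Y_n$. For a random variable $Z$ on a countable set $\mathcal Z$ with pmf $P_Z$, list the elements of positive probability as $z_1,z_2,\dots$ (a finite or countably infinite list) with $P_Z(z_1)\ge P_Z(z_2)\ge\cdots$ (ties broken arbitrarily). Set $\delta_0=0$ and $\delta_k=\sum_{i\le k}P_Z(z_i)$. For $\delta\in[0,1)$ define $c^z(\delta)=\log\frac{1}{P_Z(z_k)}$, where $k$ is the unique index with $\delta\in[\delta_{k-1},\delta_k)$. Here $c_n^x$ and $c_n^y$ denote this function built from $P_{X_n}$ and from $P_{Y_n}$ respectively. The variational distance is $d(P,Q)=\sum_a|P(a)-Q(a)|$. $\mathbf X$ is an approximating source for $\mathbf Y$ if there exist deterministic maps $\phi_n:\mathcal X_n\to\mathcal Y_n$ with $\lim_{n\to\infty}d(P_{Y_n},P_{\phi_n(X_n)})=0$. $\mu$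 denotes Lebesgue measure. *)

(* Defs.v *)
From Stdlib Require Import Reals.
From mathcomp Require Import ssreflect ssrfun ssrbool eqtype ssrnat choice.

Set Implicit Arguments.
Unset Strict Implicit.

Open Scope R_scope.

(* k-th term of the canonical enumeration of a countable type: each element
   of T occurs exactly once (at index pickle x), other indices give 0. *)
Definition cterm (T : countType) (f : T -> R) (k : nat) : R :=
  match @pickle_inv T k with Some x => f x | None => 0 end.

(* sum_{x in T} f x = l  (f will always be nonnegative here, so the order of
   summation is irrelevant) *)
Definition has_csum (T : countType) (f : T -> R) (l : R) : Prop :=
  infinite_sum (cterm f) l.

Definition is_pmf (T : countType) (P : T -> R) : Prop :=
  (forall x, 0 <= P x) /\ has_csum P 1.

(* A listing z_1, z_2, ... (0-indexed here: e 0, e 1, ...) of the elements of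
   positive probability, finite (then e i = None from some index on) or
   countably infinite, with nonincreasing probabilities; ties arbitrary. *)
Definition sorted_listing (T : countType) (P : T -> R) (e : nat -> option T)
  : Prop :=
  (forall i, e i = None -> e (S i) = None) /\
  (forall i j x, e i = Some x -> e j = Some x -> i = j) /\
  (forall i x, e i = Some x -> 0 < P x) /\
  (forall x, 0 < P x -> exists i, e i = Some x) /\
  (forall i j x y, e i = Some x -> e j = Some y -> (i <= j)%nat -> P y <= P x).

(* probability of the (i+1)-th listed element, i.e. P_Z(z_{i+1}) *)
Definition lprob (T : countType) (P : T -> R) (e : nat -> option T) (i : nat)
  : R := match e i with Some x => P x | None => 0 end.

(* cumulative sums: cum k = delta_k = sum_{i<=k} P_Z(z_i) (1-indexed) *)
Fixpoint cum (T : countType) (P : T -> R) (e : nat -> option T) (k : nat) : R :=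
  match k with
  | O => 0
  | S k' => cum P e k' + lprob P e k'
  end.

(* c^z(delta) = v :  v = log (1 / P_Z(z_k)) where delta in [delta_{k-1}, delta_k)
   (k is 1-indexed in the paper; here k = S i). *)
Definition cval (T : countType) (P : T -> R) (e : nat -> option T)
  (delta v : R) : Prop :=
  exists i, cum P e i <= delta < cum P e (S i) /\ v = ln (1 / lprob P e i).

Definition outer_measure_le (A : R -> Prop) (r : R) : Prop :=
  forall eps, 0 < eps ->
  exists a b : nat -> R,
    (forall i, a i <= b i) /\
    (forall x, A x -> exists i, a i < x < b i) /\
    (forall m, sum_f_R0 (fun i => b i - a i) m <= r + eps).

Definition measure_tends_to_zero (A : nat -> R -> Prop) : Prop :=
  forall eps, 0 < eps -> exists N, forall n, (N <= n)%nat ->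
    outer_measure_le (A n) eps.

Definition pushforward_is (TX TY : countType) (PX : TX -> R) (phi : TX -> TY)
  (y : TY) (q : R) : Prop :=
  has_csum (fun x => if phi x == y then PX x else 0) q.

Definition var_dist_push_is (TX TY : countType) (PX : TX -> R) (PY : TY -> R)
  (phi : TX -> TY) (d : R) : Prop :=
  exists Q : TY -> R,
    (forall y, pushforward_is PX phi y (Q y)) /\
    has_csum (fun y => Rabs (PY y - Q y)) d.

Definition approximating_source (X Y : nat -> countType)
  (PX : forall n, X n -> R) (PY : forall n, Y n -> R) : Prop :=
  exists phi : forall n, X n -> Y n,
    forall eps, 0 < eps -> exists N, forall n, (N <= n)%nat ->
      exists d, var_dist_push_is (PX n) (PY n) (phi n) d /\ d < eps.

(* Main.v *)
Require Import Defs.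
From Stdlib Require Import Reals Lra Lia Classical ClassicalEpsilon.
From mathcomp Require Import ssreflect ssrfun ssrbool eqtype ssrnat choice.
Open Scope R_scope.

Fixpoint psum (u : nat -> R) (K : nat) : R :=
  match K with O => 0 | S K' => psum u K' + u K' end.

Lemma psum_sf u n : sum_f_R0 u n = psum u (S n).
Proof. induction n as [|n IH]; simpl; [lra|]. simpl in IH. rewrite IH. lra. Qed.

Lemma psum_nonneg u K : (forall i, 0 <= u i) -> 0 <= psum u K.
Proof. intro H. induction K; simpl; [lra|]. specialize (H K). lra. Qed.

Lemma psum_mono u K K' : (forall i, 0 <= u i) -> (K <= K')%coq_nat -> psum u K <= psum u K'.
Proof.
  intros H HK. induction HK; [lra|]. simpl. specialize (H m). lra.
Qed.

Lemma psum_le u v K : (forall i, (i < K)%coq_nat -> u i <= v i) -> psum u K <= psum v K.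
Proof.
  induction K; intro H; simpl; [lra|].
  assert (psum u K <= psum v K) by (apply IHK; intros; apply H; lia).
  specialize (H K ltac:(lia)). lra.
Qed.

Lemma psum_ext u v K : (forall i, (i < K)%coq_nat -> u i = v i) -> psum u K = psum v K.
Proof.
  induction K; intro H; simpl; [lra|].
  rewrite IHK; [|intros; apply H; lia]. rewrite (H K ltac:(lia)). lra.
Qed.

Lemma psum_plus u v K : psum (fun i => u i + v i) K = psum u K + psum v K.
Proof. induction K; simpl; lra. Qed.

Lemma psum_minus u v K : psum (fun i => u i - v i) K = psum u K - psum v K.
Proof. induction K; simpl; lra. Qed.

Lemma psum_scal c u K : psum (fun i => c * u i) K = c * psum u K.
Proof. induction K; simpl; lra. Qed.

Lemma psum_telesc (f : nat -> R) K : psum (fun i => f (S i) - f i) K = f K - f O.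
Proof. induction K; simpl; lra. Qed.

Lemma psum_zero u K : (forall i, (i < K)%coq_nat -> u i = 0) -> psum u K = 0.
Proof. intro H. rewrite (psum_ext u (fun _ => 0)); [|exact H]. clear H. induction K; simpl; [lra|]. rewrite IHK. lra. Qed.

Lemma psum_remove v i0 K : (i0 < K)%coq_nat ->
  psum v K = psum (fun i => if Nat.eqb i i0 then 0 else v i) K + v i0.
Proof.
  induction K; intro H; [lia|]. simpl.
  destruct (Nat.eq_dec K i0) as [->|Hne].
  - rewrite Nat.eqb_refl.
    rewrite (psum_ext (fun i => if Nat.eqb i i0 then 0 else v i) v); [lra|].
    intros i Hi. destruct (Nat.eqb_spec i i0); [lia|auto].
  - rewrite IHK; [|lia]. destruct (Nat.eqb_spec K i0); [lia|]. lra.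
Qed.

Lemma reindex (u : nat -> R) (Rel : nat -> nat -> Prop) K K' :
  (forall k k' i, (k < K)%coq_nat -> (k' < K)%coq_nat -> Rel k i -> Rel k' i -> k = k') ->
  forall v : nat -> R, (forall i, 0 <= v i) ->
  (forall k, (k < K)%coq_nat -> u k = 0 \/ exists i, (i < K')%coq_nat /\ u k <= v i /\ Rel k i) ->
  psum u K <= psum v K'.
Proof.
  induction K as [|K IH]; intros Hinj v Hv H; simpl.
  - apply psum_nonneg; auto.
  - destruct (H K ltac:(lia)) as [H0|[i0 [Hi0 [Hle HR]]]].
    + rewrite H0. assert (psum u K <= psum v K'); [|lra].
      apply IH; [ |exact Hv| ].
      * intros k k' i Hk Hk' H1 H2; apply (Hinj k k' i); auto; lia.
      * intros k Hk; apply H; lia.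
    + rewrite (psum_remove v i0 K' Hi0).
      assert (psum u K <= psum (fun i => if Nat.eqb i i0 then 0 else v i) K'); [|lra].
      apply IH.
      * intros; apply (Hinj k k' i); auto; lia.
      * intro i; destruct (Nat.eqb i i0); [lra|auto].
      * intros k Hk. destruct (H k ltac:(lia)) as [?|[i [Hi [Hl HRk]]]]; [left; auto|right].
        exists i. split; [auto|]. destruct (Nat.eqb_spec i i0) as [->|]; [|auto].
        assert (k = K) by (apply (Hinj k K i0); auto; lia). lia.
Qed.

Lemma isum_iff u l : (forall i, 0 <= u i) ->
  (infinite_sum u l <-> ((forall K, psum u K <= l) /\ (forall eps, 0 < eps -> exists K, l - eps < psum u K))).
Proof.
  intro Hu. split.
  - intro H. split.
    + intro K. destruct (Rle_dec (psum u K) l) as [|Hn]; auto. exfalso.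
      destruct (H (psum u K - l)) as [N HN]; [lra|].
      specialize (HN (N + K)%coq_nat ltac:(lia)). rewrite psum_sf in HN.
      assert (psum u K <= psum u (S (N+K)%coq_nat)) by (apply psum_mono; auto; lia).
      unfold Rdist in HN. rewrite Rabs_right in HN; lra.
    + intros eps He. destruct (H eps He) as [N HN]. exists (S N).
      specialize (HN N ltac:(lia)). rewrite psum_sf in HN. unfold Rdist in HN.
      apply Rabs_def2 in HN. lra.
  - intros [H1 H2] eps He. destruct (H2 eps He) as [K HK]. exists K. intros n Hn.
    rewrite psum_sf. unfold Rdist.
    assert (psum u K <= psum u (S n)) by (apply psum_mono; auto; lia).
    specialize (H1 (S n)). rewrite Rabs_left1; lra.
Qed.

Lemma isum_exists u B : (forall i, 0 <= u i) -> (forall K, psum u K <= B) ->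
  exists l, infinite_sum u l /\ l <= B.
Proof.
  intros Hu HB.
  destruct (completeness (fun x => exists K, x = psum u K)) as [m [Hm1 Hm2]].
  - exists B. intros x [K ->]. auto.
  - exists 0. exists O. reflexivity.
  - exists m. split.
    + apply isum_iff; auto. split.
      * intro K. apply Hm1. exists K; auto.
      * intros eps He. apply NNPP. intro Hn.
        assert (m <= m - eps); [|lra]. apply Hm2. intros x [K ->].
        apply Rnot_lt_le. intro; apply Hn; exists K; auto.
    + apply Hm2. intros x [K ->]; auto.
Qed.

Lemma isum_le u l K : (forall i, 0 <= u i) -> infinite_sum u l -> psum u K <= l.
Proof. intros Hu H. apply (isum_iff u l Hu) in H. apply H. Qed.

Lemma isum_transfer u v l : (forall i, 0 <= u i) -> (forall i, 0 <= v i) ->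
  (forall K, exists K', psum u K <= psum v K') ->
  (forall K, exists K', psum v K <= psum u K') ->
  infinite_sum u l -> infinite_sum v l.
Proof.
  intros Hu Hv H1 H2 H. apply isum_iff in H; auto. apply isum_iff; auto.
  destruct H as [Ha Hb]. split.
  - intro K. destruct (H2 K) as [K' HK']. specialize (Ha K'). lra.
  - intros eps He. destruct (Hb eps He) as [K HK]. destruct (H1 K) as [K' HK'].
    exists K'. lra.
Qed.

Lemma isum_ext u v l : (forall i, u i = v i) -> infinite_sum u l -> infinite_sum v l.
Proof.
  intros H Hs eps He. destruct (Hs eps He) as [N HN]. exists N. intros n Hn.
  rewrite psum_sf (psum_ext v u); [rewrite -psum_sf; apply HN; auto|]. intros; rewrite H; auto.
Qed.

Lemma isum_minus u v l1 l2 : infinite_sum u l1 -> infinite_sum v l2 ->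
  infinite_sum (fun i => u i - v i) (l1 - l2).
Proof.
  intros H1 H2. assert (Hc := CV_minus _ _ _ _ H1 H2).
  intros eps He. destruct (Hc eps He) as [N HN]. exists N. intros n Hn.
  rewrite minus_sum. apply HN; auto.
Qed.

Definition lst {T : Type} (e : nat -> option T) (f : T -> R) (i : nat) : R :=
  match e i with Some x => f x | None => 0 end.

Lemma lst_nonneg {T} (e : nat -> option T) f : (forall x, 0 <= f x) -> forall i, 0 <= lst e f i.
Proof. intros H i; unfold lst; destruct (e i); [apply H|lra]. Qed.

Lemma cterm_nonneg (T : countType) (f : T -> R) : (forall x, 0 <= f x) -> forall i, 0 <= cterm f i.
Proof. intros H i; unfold cterm; destruct (pickle_inv i); [apply H|lra]. Qed.

Lemma pinv_inj (T : countType) k k' (x : T) : pickle_inv k = Some x -> pickle_inv k' = Some x -> k = k'.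
Proof.
  intros H1 H2. have E1 := @pickle_invK T k. have E2 := @pickle_invK T k'.
  rewrite H1 /= in E1. rewrite H2 /= in E2. congruence.
Qed.

Section Rearr.
Variable T : countType.
Variable f : T -> R.
Variable e : nat -> option T.
Hypothesis fpos : forall x, 0 <= f x.
Hypothesis einj : forall i j x, e i = Some x -> e j = Some x -> i = j.
Hypothesis esurj : forall x, 0 < f x -> exists i, e i = Some x.

Lemma dom1_bound K : exists K', forall k, (k < K)%coq_nat -> forall x, pickle_inv k = Some x ->
  0 < f x -> exists i, (i < K')%coq_nat /\ e i = Some x.
Proof.
  induction K as [|K [K' IH]].
  - exists O. intros; lia.
  - destruct (@pickle_inv T K) as [x|] eqn:Ek.
    + destruct (Rlt_dec 0 (f x)) as [Hf|Hf].
      * destruct (esurj x Hf) as [i0 Hi0]. exists (Nat.max K' (S i0)).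
        intros k Hk y Hy Hfy. destruct (Nat.eq_dec k K) as [->|Hne].
        -- rewrite Ek in Hy. injection Hy as <-. exists i0. split; [lia|auto].
        -- destruct (IH k ltac:(lia) y Hy Hfy) as [i [Hi Hei]]. exists i; split; [lia|auto].
      * exists K'. intros k Hk y Hy Hfy. destruct (Nat.eq_dec k K) as [->|Hne].
        -- rewrite Ek in Hy. injection Hy as <-. lra.
        -- apply (IH k ltac:(lia) y Hy Hfy).
    + exists K'. intros k Hk y Hy Hfy. destruct (Nat.eq_dec k K) as [->|Hne].
      -- rewrite Ek in Hy. discriminate.
      -- apply (IH k ltac:(lia) y Hy Hfy).
Qed.

Lemma dom1 K : exists K', psum (cterm f) K <= psum (lst e f) K'.
Proof.
  destruct (dom1_bound K) as [K' HK']. exists K'.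
  apply (reindex _ (fun k i => exists x, pickle_inv k = Some x /\ e i = Some x)).
  - intros k k' i _ _ [x [H1 H2]] [y [H3 H4]]. rewrite H2 in H4. injection H4 as <-.
    apply (pinv_inj _ _ _ x); auto.
  - apply lst_nonneg; auto.
  - intros k Hk. unfold cterm. destruct (@pickle_inv T k) as [x|] eqn:Ek; [|left; auto].
    destruct (Rlt_dec 0 (f x)) as [Hf|Hf]; [|left; specialize (fpos x); lra].
    right. destruct (HK' k Hk x Ek Hf) as [i [Hi Hei]]. exists i. split; [auto|].
    split; [unfold lst; rewrite Hei; lra|]. exists x; auto.
Qed.

Lemma dom2_bound K : exists K', forall i, (i < K)%coq_nat -> forall x, e i = Some x ->
  (pickle x < K')%coq_nat.
Proof.
  induction K as [|K [K' IH]].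
  - exists O. intros; lia.
  - destruct (e K) as [x|] eqn:Ek.
    + exists (Nat.max K' (S (pickle x))). intros i Hi y Hy.
      destruct (Nat.eq_dec i K) as [->|Hne].
      * rewrite Ek in Hy. injection Hy as <-. lia.
      * specialize (IH i ltac:(lia) y Hy). lia.
    + exists K'. intros i Hi y Hy. destruct (Nat.eq_dec i K) as [->|Hne].
      * rewrite Ek in Hy; discriminate.
      * apply (IH i ltac:(lia) y Hy).
Qed.

Lemma dom2 K : exists K', psum (lst e f) K <= psum (cterm f) K'.
Proof.
  destruct (dom2_bound K) as [K' HK']. exists K'.
  apply (reindex _ (fun i k => exists x, e i = Some x /\ pickle_inv k = Some x)).
  - intros k k' i _ _ [x [H1 H2]] [y [H3 H4]]. rewrite H2 in H4. injection H4 as <-.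
    apply (einj _ _ x); auto.
  - apply cterm_nonneg; auto.
  - intros i Hi. unfold lst. destruct (e i) as [x|] eqn:Ei; [|left; auto].
    right. exists (pickle x). split; [apply (HK' i Hi x Ei)|].
    unfold cterm. rewrite pickleK_inv. split; [lra|]. exists x; split; auto.
Qed.

Lemma csum_listing l : has_csum f l <-> infinite_sum (lst e f) l.
Proof.
  unfold has_csum. split; apply isum_transfer;
    try apply cterm_nonneg; try apply lst_nonneg; auto; try apply dom1; apply dom2.
Qed.
End Rearr.

Lemma heine_borel (a b : nat -> R) c d : c <= d ->
  (forall x, c <= x <= d -> exists i, a i < x < b i) ->
  exists Mc, forall x, c <= x <= d -> exists i, (i < Mc)%coq_nat /\ a i < x < b i.
Proof.
  intros Hcd Hcov.
  set (E := fun x => c <= x <= d /\ exists Mc, forall y, c <= y <= x -> exists i, (i < Mc)%coq_nat /\ a i < y < b i).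
  assert (Ec : E c).
  { split; [lra|]. destruct (Hcov c ltac:(lra)) as [i0 Hi0]. exists (S i0).
    intros y Hy. exists i0. split; [lia|]. replace y with c by lra. auto. }
  destruct (completeness E) as [s [Hs1 Hs2]].
  - exists d. intros x [Hx _]. lra.
  - exists c; auto.
  - assert (Hcs : c <= s) by (apply Hs1; auto).
    assert (Hsd : s <= d) by (apply Hs2; intros x [Hx _]; lra).
    destruct (Hcov s ltac:(lra)) as [i0 Hi0].
    assert (Hx : exists x, E x /\ a i0 < x).
    { apply NNPP. intro Hn. assert (s <= a i0); [|lra]. apply Hs2. intros x Ex.
      apply Rnot_lt_le. intro; apply Hn; exists x; auto. }
    destruct Hx as [x [[Hx1 [Mc HMc]] Hax]].
    set (x' := Rmin d ((s + b i0)/2)).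
    assert (Ex' : E x').
    { split. { unfold x'; split; [apply Rmin_glb; lra | apply Rmin_l]. }
      exists (Nat.max Mc (S i0)). intros y Hy.
      destruct (Rle_dec y x) as [Hyx|Hyx].
      - destruct (HMc y ltac:(lra)) as [i [Hi Hab]]. exists i; split; [lia|auto].
      - exists i0. split; [lia|]. split; [lra|].
        assert (x' <= (s + b i0)/2) by apply Rmin_r. lra. }
    assert (Hx's : x' <= s) by (apply Hs1; auto).
    assert (x' = d).
    { unfold x' in *. unfold Rmin in *. destruct (Rle_dec d ((s + b i0)/2)); lra. }
    destruct Ex' as [_ [Mc' HMc']]. exists Mc'. intros y Hy. apply HMc'. lra.
Qed.

Definition ind_cc (al be : R) (t : nat) : R :=
  if Rle_dec al (INR t) then if Rle_dec (INR t) be then 1 else 0 else 0.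
Definition ind_oo (al be : R) (t : nat) : R :=
  if Rlt_dec al (INR t) then if Rlt_dec (INR t) be then 1 else 0 else 0.

Lemma ind_cc_01 al be t : ind_cc al be t = 0 \/ ind_cc al be t = 1.
Proof. unfold ind_cc; destruct (Rle_dec _ _); [destruct (Rle_dec _ _)|]; simpl; auto. Qed.
Lemma ind_oo_01 al be t : ind_oo al be t = 0 \/ ind_oo al be t = 1.
Proof. unfold ind_oo; destruct (Rlt_dec _ _); [destruct (Rlt_dec _ _)|]; simpl; auto. Qed.
Lemma ind_oo_nonneg al be t : 0 <= ind_oo al be t.
Proof. destruct (ind_oo_01 al be t) as [->| ->]; lra. Qed.
Lemma ind_cc_nonneg al be t : 0 <= ind_cc al be t.
Proof. destruct (ind_cc_01 al be t) as [->| ->]; lra. Qed.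

Lemma cnt_cc_lower N al be : 0 <= al ->
  psum (ind_cc al be) (S N) >= Rmin (INR N + 1) be - al - 1.
Proof.
  intro Hal. induction N as [|N IH].
  - simpl. unfold ind_cc. simpl. replace (0+1) with 1 by lra.
    assert (Rmin 1 be <= 1) by apply Rmin_l. assert (Rmin 1 be <= be) by apply Rmin_r.
    destruct (Rle_dec al 0); [destruct (Rle_dec 0 be)|]; simpl; lra.
  - change (psum (ind_cc al be) (S (S N))) with (psum (ind_cc al be) (S N) + ind_cc al be (S N)).
    assert (H0 : 0 <= psum (ind_cc al be) (S N)) by (apply psum_nonneg; apply ind_cc_nonneg).
    rewrite S_INR. unfold ind_cc at 2. rewrite S_INR.
    assert (Rmin (INR N + 1 + 1) be <= INR N + 1 + 1) by apply Rmin_l.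
    assert (Rmin (INR N + 1 + 1) be <= be) by apply Rmin_r.
    assert (Rmin (INR N + 1) be <= INR N + 1) by apply Rmin_l.
    assert (Rmin (INR N + 1) be <= be) by apply Rmin_r.
    destruct (Rle_dec al (INR N + 1)); [destruct (Rle_dec (INR N + 1) be)|]; cbn [is_left].
    + assert (Rmin (INR N + 1) be = INR N + 1) by (apply Rmin_left; lra). lra.
    + assert (Rmin (INR N + 1) be = be) by (apply Rmin_right; lra). lra.
    + lra.
Qed.

Lemma cnt_oo_upper N al be :
  psum (ind_oo al be) (S N) <= Rmax 0 (Rmin (INR N) be - al + 1).
Proof.
  induction N as [|N IH].
  - simpl. unfold ind_oo. simpl.
    assert (0 <= Rmax 0 (Rmin 0 be - al + 1)) by apply Rmax_l.
    destruct (Rlt_dec al 0); [destruct (Rlt_dec 0 be)|]; cbn [is_left]; try lra.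
    assert (Rmin 0 be = 0) by (apply Rmin_left; lra).
    assert (Rmin 0 be - al + 1 <= Rmax 0 (Rmin 0 be - al + 1)) by apply Rmax_r. lra.
  - change (psum (ind_oo al be) (S (S N))) with (psum (ind_oo al be) (S N) + ind_oo al be (S N)).
    unfold ind_oo at 2. rewrite S_INR.
    assert (Hm1 : Rmin (INR N) be <= Rmin (INR N + 1) be).
    { unfold Rmin. destruct (Rle_dec (INR N) be); destruct (Rle_dec (INR N + 1) be); lra. }
    assert (Hm2 : Rmax 0 (Rmin (INR N) be - al + 1) <= Rmax 0 (Rmin (INR N + 1) be - al + 1)).
    { unfold Rmax. destruct (Rle_dec 0 (Rmin (INR N) be - al + 1));
      destruct (Rle_dec 0 (Rmin (INR N + 1) be - al + 1)); lra. }
    destruct (Rlt_dec al (INR N + 1)); [destruct (Rlt_dec (INR N + 1) be)|]; cbn [is_left]; try lra.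
    assert (Rmin (INR N + 1) be = INR N + 1) by (apply Rmin_left; lra).
    assert (Rmin (INR N) be = INR N) by (apply Rmin_left; lra).
    rewrite H H0 in IH |- *.
    assert (INR N + 1 - al + 1 <= Rmax 0 (INR N + 1 - al + 1)) by apply Rmax_r.
    unfold Rmax in IH. destruct (Rle_dec 0 (INR N - al + 1)); lra.
Qed.

Lemma psum_swap (g : nat -> nat -> R) M N :
  psum (fun k => psum (g k) N) M = psum (fun t => psum (fun k => g k t) M) N.
Proof.
  induction M as [|M IH]; simpl.
  - symmetry; apply psum_zero; auto.
  - rewrite IH. rewrite -psum_plus. apply psum_ext. intros; simpl; lra.
Qed.

Lemma psum_single v i0 K : (forall i, 0 <= v i) -> (i0 < K)%coq_nat -> v i0 <= psum v K.
Proof.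
  intros Hv Hi. rewrite (psum_remove v i0 K Hi).
  assert (0 <= psum (fun i => if Nat.eqb i i0 then 0 else v i) K); [|lra].
  apply psum_nonneg. intro i; destruct (Nat.eqb i i0); [lra|auto].
Qed.

Lemma sum01 (w : nat -> R) M : (forall k, (k < M)%coq_nat -> w k = 0 \/ w k = 1) ->
  (forall k k', (k < M)%coq_nat -> (k' < M)%coq_nat -> w k = 1 -> w k' = 1 -> k = k') ->
  psum w M <= 1.
Proof.
  induction M as [|M IH]; intros H01 Hu; simpl; [lra|].
  destruct (H01 M ltac:(lia)) as [HM|HM].
  - rewrite HM. assert (psum w M <= 1); [|lra]. apply IH.
    + intros; apply H01; lia.
    + intros; apply (Hu k k'); auto; lia.
  - rewrite HM. rewrite psum_zero; [lra|]. intros i Hi.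
    destruct (H01 i ltac:(lia)) as [|Hi1]; auto. assert (i = M) by (apply (Hu i M); auto; lia). lia.
Qed.

Lemma uniform_bound (P : nat -> nat -> Prop) M :
  (forall k m m', (m <= m')%coq_nat -> P k m -> P k m') ->
  (forall k, (k < M)%coq_nat -> exists m, P k m) -> exists m, forall k, (k < M)%coq_nat -> P k m.
Proof.
  intros Hmono. induction M as [|M IH]; intro H.
  - exists O; intros; lia.
  - destruct IH as [m Hm]. { intros; apply H; lia. }
    destruct (H M ltac:(lia)) as [m' Hm']. exists (Nat.max m m'). intros k Hk.
    destruct (Nat.eq_dec k M) as [->|].
    + apply (Hmono M m'); auto; lia.
    + apply (Hmono k m); [lia|]. apply Hm; lia.
Qed.

Lemma le_eps x y : (forall eps, 0 < eps -> x <= y + eps) -> x <= y.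
Proof. intro H. apply Rnot_lt_le. intro Hl. specialize (H ((x-y)/2) ltac:(lra)). lra. Qed.

Lemma ind_cc_1 al be t : ind_cc al be t = 1 -> al <= INR t <= be.
Proof. unfold ind_cc; destruct (Rle_dec _ _); [destruct (Rle_dec _ _)|]; cbn [is_left]; intros; auto; lra. Qed.

Lemma ind_oo_of al be t : al < INR t < be -> ind_oo al be t = 1.
Proof. intros [H1 H2]; unfold ind_oo; destruct (Rlt_dec _ _); [destruct (Rlt_dec _ _)|]; cbn [is_left]; auto; lra. Qed.

Lemma div_le1 c y z : 0 < c -> c * y <= z -> y <= z * / c.
Proof. intros Hc H. replace y with ((c * y) * / c) by (field; lra).
  apply Rmult_le_compat_r; [left; apply Rinv_0_lt_compat; lra|lra]. Qed.
Lemma div_le2 c y z : 0 < c -> z <= c * y -> z * / c <= y.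
Proof. intros Hc H. replace y with ((c * y) * / c) by (field; lra).
  apply Rmult_le_compat_r; [left; apply Rinv_0_lt_compat; lra|lra]. Qed.

Lemma psum_affine c d w M : psum (fun k => c * w k - d) M = c * psum w M - d * INR M.
Proof. induction M; simpl psum; [simpl; lra|]. rewrite IHM S_INR. lra. Qed.

Lemma psum_nonneg_le v M : (forall i, 0 <= v i) -> 0 <= psum v M.
Proof. apply psum_nonneg. Qed.

Lemma measure_bound (Sb : R -> Prop) r (u v : nat -> R) M :
  outer_measure_le Sb r ->
  (forall k, (k < M)%coq_nat -> 0 <= u k /\ u k <= v k /\ v k <= 1) ->
  (forall k, (k < M)%coq_nat -> forall x, u k <= x < v k -> Sb x) ->
  (forall k k', (k < M)%coq_nat -> (k' < M)%coq_nat -> forall x,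
      u k <= x < v k -> u k' <= x < v k' -> k = k') ->
  psum (fun k => v k - u k) M <= r.
Proof.
  intros Hout Huv HS Hdis.
  apply le_eps. intros eps0 He0. set (eps := eps0 / 3). assert (He : 0 < eps) by (unfold eps; lra).
  set (eta := eps / (INR M + 1)).
  assert (HM0 : 0 <= INR M) by apply pos_INR.
  assert (Heta : 0 < eta) by (unfold eta; apply Rdiv_lt_0_compat; lra).
  assert (HetaM : eta * INR M <= eps).
  { unfold eta. assert (eps / (INR M + 1) * (INR M + 1) = eps) by (field; lra). nra. }
  destruct (Hout eps He) as [a [b [Hab [Hcov Hsum]]]].
  destruct (uniform_bound (fun k m => u k <= v k - eta -> forall x, u k <= x <= v k - eta ->
       exists i, (i < m)%coq_nat /\ a i < x < b i) M) as [Mc HMc].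
  { intros k m m' Hmm H1 H2 x Hx. destruct (H1 H2 x Hx) as [i [Hi Hi']]. exists i; split; [lia|auto]. }
  { intros k Hk. destruct (Rle_dec (u k) (v k - eta)) as [Hle|Hle].
    - destruct (heine_borel a b (u k) (v k - eta) Hle) as [m Hm].
      + intros x Hx. apply Hcov. apply (HS k Hk). lra.
      + exists m. intros _ x Hx. apply Hm; auto.
    - exists O. intros; lra. }
  destruct (INR_unbounded ((INR M + INR Mc) / eps)) as [N0 HN0].
  set (N := S N0). set (NN := INR N).
  assert (HNN : INR N0 < NN) by (unfold NN, N; rewrite S_INR; lra).
  assert (HN0pos : 0 <= INR N0) by apply pos_INR.
  assert (HNNpos : 0 < NN) by lra.
  assert (HMMc : INR M + INR Mc < eps * NN).
  { assert ((INR M + INR Mc) / eps * eps = INR M + INR Mc) by (field; lra). nra. }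
  set (L := psum (fun k => psum (ind_cc (NN * u k) (NN * (v k - eta))) (S N)) M).
  assert (HL1 : NN * psum (fun k => v k - u k) M - (NN * eta + 1) * INR M <= L).
  { unfold L. rewrite -psum_affine.
    apply psum_le. intros k Hk. destruct (Huv k Hk) as [H1 [H2 H3]].
    assert (H := cnt_cc_lower N (NN * u k) (NN * (v k - eta)) ltac:(nra)).
    assert (Rmin (INR N + 1) (NN * (v k - eta)) = NN * (v k - eta)).
    { apply Rmin_right. fold NN. nra. }
    rewrite H0 in H. lra. }
  assert (HL2 : L <= NN * (r + eps) + INR Mc).
  { unfold L. rewrite psum_swap.
    apply Rle_trans with (psum (fun t => psum (fun i => ind_oo (NN * a i) (NN * b i) t) Mc) (S N)).
    - apply psum_le. intros t Ht.
      destruct (classic (exists k, (k < M)%coq_nat /\ ind_cc (NN * u k) (NN * (v k - eta)) t = 1))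
        as [[k [Hk Hk1]]|Hn].
      + apply ind_cc_1 in Hk1. set (x := INR t * / NN).
        assert (HNi : NN * / NN = 1) by (apply Rinv_r; lra).
        assert (Hip : 0 < / NN) by (apply Rinv_0_lt_compat; lra).
        assert (Hx1 : u k <= x) by (unfold x; apply div_le1; lra).
        assert (Hx2 : x <= v k - eta) by (unfold x; apply div_le2; lra).
        destruct (HMc k Hk ltac:(lra) x ltac:(lra)) as [i [Hi [Hai Hbi]]].
        apply Rle_trans with 1.
        * apply sum01.
          -- intros; apply ind_cc_01.
          -- intros k1 k2 Hk1' Hk2' E1 E2. apply ind_cc_1 in E1. apply ind_cc_1 in E2.
             apply (Hdis k1 k2 Hk1' Hk2' x).
             ++ split; [unfold x; apply div_le1; lra|]. apply Rle_lt_trans with (v k1 - eta); [unfold x; apply div_le2; lra|lra].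
             ++ split; [unfold x; apply div_le1; lra|]. apply Rle_lt_trans with (v k2 - eta); [unfold x; apply div_le2; lra|lra].
        * replace 1 with (ind_oo (NN * a i) (NN * b i) t).
          -- apply (psum_single (fun i => ind_oo (NN * a i) (NN * b i) t)); auto.
             intro; apply ind_oo_nonneg.
          -- apply ind_oo_of. assert (INR t = NN * x) by (unfold x; field; lra). nra.
      + rewrite psum_zero.
        * apply psum_nonneg. intro; apply ind_oo_nonneg.
        * intros k Hk. destruct (ind_cc_01 (NN * u k) (NN * (v k - eta)) t) as [|H1]; auto.
          exfalso; apply Hn; exists k; auto.
    - rewrite -(psum_swap (fun i t => ind_oo (NN * a i) (NN * b i) t)).
      apply Rle_trans with (psum (fun i => NN * (b i - a i) + 1) Mc).
      + apply psum_le. intros i Hi.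
        assert (H := cnt_oo_upper N (NN * a i) (NN * b i)). specialize (Hab i).
        assert (Rmin (INR N) (NN * b i) <= NN * b i) by apply Rmin_r.
        eapply Rle_trans; [exact H|]. apply Rmax_lub.
        * assert (0 <= NN * (b i - a i)) by (apply Rmult_le_pos; lra). lra.
        * assert (NN = INR N) by reflexivity. nra.
      + rewrite psum_plus psum_scal.
        assert (psum (fun _ => 1) Mc = INR Mc).
        { clear. induction Mc; simpl psum; [simpl; lra|]. rewrite IHMc S_INR. lra. }
        rewrite H.
        assert (psum (fun i => b i - a i) Mc <= r + eps).
        { destruct Mc as [|m].
          - simpl. specialize (Hsum O). simpl in Hsum. specialize (Hab O). lra.
          - rewrite -psum_sf. apply Hsum. }
        nra. }
  assert (HX : NN * (psum (fun k => v k - u k) M - (r + eps + eps + eps)) <= 0) by nra.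
  assert (psum (fun k => v k - u k) M - (r + eps + eps + eps) <= 0).
  { apply Rnot_lt_le. intro Hc. assert (0 < NN * (psum (fun k => v k - u k) M - (r + eps + eps + eps))) by (apply Rmult_lt_0_compat; lra). lra. }
  unfold eps in *. lra.
Qed.

Lemma isum_ub u l B : (forall i, 0 <= u i) -> infinite_sum u l -> (forall K, psum u K <= B) -> l <= B.
Proof.
  intros Hu H HB. apply isum_iff in H; auto. destruct H as [_ H].
  apply Rnot_lt_le. intro Hc. destruct (H (l - B) ltac:(lra)) as [K HK]. specialize (HB K). lra.
Qed.

Lemma isum_mono u v l1 l2 : (forall i, 0 <= u i) -> (forall i, u i <= v i) ->
  infinite_sum u l1 -> infinite_sum v l2 -> l1 <= l2.
Proof.
  intros Hu Huv H1 H2. apply (isum_ub u l1 l2 Hu H1). intro K.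
  apply Rle_trans with (psum v K). apply psum_le; auto.
  apply isum_le; auto. intro i; specialize (Hu i); specialize (Huv i); lra.
Qed.

Lemma isum_zero : infinite_sum (fun _ => 0) 0.
Proof. apply isum_iff; [intro; lra|]. split.
  - intro K. rewrite psum_zero; auto; lra.
  - intros eps He. exists O. simpl. lra. Qed.

Definition Lim (u : nat -> R) : R := epsilon (inhabits 0) (fun l => infinite_sum u l).

Lemma Lim_spec u : (exists l, infinite_sum u l) -> infinite_sum u (Lim u).
Proof. intro H. unfold Lim. apply (epsilon_spec (inhabits 0) (fun l => infinite_sum u l) H). Qed.

Section Listing.
Variable T : countType.
Variable P : T -> R.
Variable e : nat -> option T.
Hypothesis hP : is_pmf P.
Hypothesis he : sorted_listing P e.
Set Default Proof Using "All".

Definition pp := lprob P e.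
Definition aa := cum P e.

Lemma pp_nonneg i : 0 <= pp i.
Proof. unfold pp, lprob. destruct (e i); [apply hP|lra]. Qed.

Lemma none_prop i j : (i <= j)%coq_nat -> e i = None -> e j = None.
Proof.
  destruct he as [Hn _]. induction 1; auto.
Qed.

Lemma pp_noninc i j : (i <= j)%coq_nat -> pp j <= pp i.
Proof.
  intro Hij. unfold pp, lprob.
  destruct (e j) as [y|] eqn:Ej; [|destruct (e i); [apply hP|lra]].
  destruct (e i) as [x|] eqn:Ei.
  - destruct he as [_ [_ [_ [_ Hs]]]]. apply (Hs i j x y Ei Ej). apply/leP. auto.
  - rewrite (none_prop i j Hij Ei) in Ej. discriminate.
Qed.

Lemma pp_pos i : e i <> None -> 0 < pp i.
Proof.
  intro H. unfold pp, lprob. destruct (e i) as [x|] eqn:Ei; [|congruence].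
  destruct he as [_ [_ [Hp _]]]. apply (Hp i x Ei).
Qed.

Lemma aa_psum k : aa k = psum pp k.
Proof. induction k; simpl; auto. unfold aa in *. simpl. rewrite IHk. reflexivity. Qed.

Lemma aa_S k : aa (S k) = aa k + pp k.
Proof. reflexivity. Qed.

Lemma pp_sum : infinite_sum pp 1.
Proof.
  destruct hP as [Hnn Hs]. destruct he as [_ [Hinj [_ [Hsurj _]]]].
  apply (csum_listing T P e Hnn Hinj Hsurj) in Hs. apply (isum_ext (lst e P)); auto.
Qed.

Lemma aa_mono i j : (i <= j)%coq_nat -> aa i <= aa j.
Proof. intro H. rewrite !aa_psum. apply psum_mono; auto. apply pp_nonneg. Qed.

Lemma aa_le1 k : aa k <= 1.
Proof. rewrite aa_psum. apply isum_le. apply pp_nonneg. apply pp_sum. Qed.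

Lemma aa_nonneg k : 0 <= aa k.
Proof. rewrite aa_psum. apply psum_nonneg. apply pp_nonneg. Qed.

Lemma aa_0 : aa 0 = 0.
Proof. reflexivity. Qed.

Lemma aa_tends eps : 0 < eps -> exists K, 1 - eps < aa K.
Proof.
  intro He. have := pp_sum. move/(isum_iff pp 1 pp_nonneg) => [_ H].
  destruct (H eps He) as [K HK]. exists K. rewrite aa_psum; auto.
Qed.

Lemma aa_index_K t K : aa 0 <= t -> t < aa K -> exists i, (i < K)%coq_nat /\ aa i <= t < aa (S i).
Proof.
  intro H0. induction K as [|K IH]; intro HK; [lra|].
  destruct (Rlt_dec t (aa K)) as [Hl|Hl].
  - destruct (IH Hl) as [i [Hi Hi']]. exists i; split; [lia|auto].
  - exists K. split; [lia|lra].
Qed.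

Lemma aa_index t : 0 <= t < 1 -> exists i, aa i <= t < aa (S i).
Proof.
  intros [H0 H1]. destruct (aa_tends (1 - t) ltac:(lra)) as [K HK].
  destruct (aa_index_K t K) as [i [_ Hi]]; [rewrite aa_0; lra|lra|]. exists i; auto.
Qed.

Lemma aa_index_uniq t i j : aa i <= t < aa (S i) -> aa j <= t < aa (S j) -> i = j.
Proof.
  intros Hi Hj. destruct (Nat.lt_trichotomy i j) as [Hl|[|Hl]]; auto.
  - assert (aa (S i) <= aa j) by (apply aa_mono; lia). lra.
  - assert (aa (S j) <= aa i) by (apply aa_mono; lia). lra.
Qed.

Lemma aa_step_some i : aa i < aa (S i) -> e i <> None /\ 0 < pp i.
Proof.
  rewrite aa_S. intro H. split.
  - intro Hn. unfold pp, lprob in H. rewrite Hn in H. lra.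
  - lra.
Qed.

Lemma cval_at t i : aa i <= t < aa (S i) -> cval P e t (ln (1 / pp i)).
Proof. intro H. exists i. split; auto. Qed.

Lemma cval_inv t c i : aa i <= t < aa (S i) -> cval P e t c -> c = ln (1 / pp i).
Proof.
  intros Hi [j [Hj ->]]. assert (j = i) by (apply (aa_index_uniq t); auto). subst. reflexivity.
Qed.

Definition hterm (t : R) (i : nat) : R := if Rlt_dec (aa i) t then pp i else 0.

Lemma hterm_nonneg t i : 0 <= hterm t i.
Proof. unfold hterm. destruct (Rlt_dec _ _); cbn [is_left]; [apply pp_nonneg|lra]. Qed.

Lemma hterm_le t i : hterm t i <= pp i.
Proof. unfold hterm. destruct (Rlt_dec _ _); cbn [is_left]; [lra|apply pp_nonneg]. Qed.

Definition HH (t : R) : R := Lim (hterm t).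

Lemma HH_sum t : infinite_sum (hterm t) (HH t).
Proof.
  apply Lim_spec. destruct (isum_exists (hterm t) 1) as [l [Hl _]].
  - apply hterm_nonneg.
  - intro K. apply Rle_trans with (psum pp K). apply psum_le; intros; apply hterm_le.
    rewrite -aa_psum. apply aa_le1.
  - exists l; auto.
Qed.

Lemma HH_le1 t : HH t <= 1.
Proof.
  apply (isum_ub (hterm t)). apply hterm_nonneg. apply HH_sum. intro K.
  apply Rle_trans with (psum pp K). apply psum_le; intros; apply hterm_le.
  rewrite -aa_psum. apply aa_le1.
Qed.

Lemma HH_lower t K : (forall i, (i < K)%coq_nat -> aa i < t) -> aa K <= HH t.
Proof.
  intro H. rewrite aa_psum. rewrite (psum_ext pp (hterm t)).
  - apply isum_le. apply hterm_nonneg. apply HH_sum.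
  - intros i Hi. unfold hterm. destruct (Rlt_dec _ _); cbn [is_left]; auto.
    specialize (H i Hi). lra.
Qed.

Lemma HH_upper t k : t <= aa k -> HH t <= aa k.
Proof.
  intro Hk. apply (isum_ub (hterm t)). apply hterm_nonneg. apply HH_sum.
  intro K. induction K as [|K IH].
  - simpl. apply aa_nonneg.
  - destruct (Compare_dec.le_lt_dec k K) as [Hl|Hl].
    + simpl. unfold hterm at 2. destruct (Rlt_dec _ _); cbn [is_left]; [|lra].
      assert (aa k <= aa K) by (apply aa_mono; lia). lra.
    + apply Rle_trans with (psum pp (S K)). apply psum_le; intros; apply hterm_le.
      rewrite -aa_psum. apply aa_mono. lia.
Qed.

Lemma first_ge t K : t <= aa K -> exists N, t <= aa N /\ forall i, (i < N)%coq_nat -> aa i < t.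
Proof.
  induction K as [|K IH]; intro H.
  - exists O. split; auto. intros; lia.
  - destruct (Rle_dec t (aa K)) as [Hl|Hl]; [apply IH; auto|].
    exists (S K). split; auto. intros i Hi.
    assert (aa i <= aa K) by (apply aa_mono; lia). lra.
Qed.

Lemma HH_ge t : t <= 1 -> t <= HH t.
Proof.
  intro Ht. destruct (classic (exists K, t <= aa K)) as [[K HK]|Hn].
  - destruct (first_ge t K HK) as [N [HN1 HN2]].
    assert (aa N <= HH t) by (apply HH_lower; auto). lra.
  - assert (Hx : forall eps, 0 < eps -> 1 <= HH t + eps).
    { intros eps He. destruct (aa_tends eps He) as [K HK].
    assert (aa K <= HH t).
    { apply HH_lower. intros i _. apply Rnot_le_lt. intro; apply Hn; exists i; auto. }
    lra. }
    assert (1 <= HH t); [|lra]. apply Rnot_lt_le. intro Hc.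
    specialize (Hx ((1 - HH t)/2) ltac:(lra)). lra.
Qed.

Lemma HH_mono t s : t <= s -> HH t <= HH s.
Proof.
  intro H. apply (isum_mono (hterm t) (hterm s)); try apply HH_sum; try apply hterm_nonneg.
  intro i. unfold hterm. destruct (Rlt_dec (aa i) t); destruct (Rlt_dec (aa i) s); cbn [is_left];
    try lra; have := pp_nonneg i; lra.
Qed.

Lemma HH_flat t s : t <= s -> s <= HH t -> HH s = HH t.
Proof.
  intros H1 H2. apply (uniqueness_sum (hterm s)). apply HH_sum.
  apply (isum_ext (hterm t)); [|apply HH_sum].
  intro i. unfold hterm. destruct (Rlt_dec (aa i) t); destruct (Rlt_dec (aa i) s); cbn [is_left];
    auto; try lra.
  exfalso. assert (HH t <= aa i) by (apply HH_upper; lra). lra.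
Qed.

Lemma HH_0 : HH 0 = 0.
Proof.
  assert (HH 0 <= aa 0) by (apply HH_upper; rewrite aa_0; lra).
  assert (0 <= HH 0) by (apply HH_ge; lra). rewrite aa_0 in H. lra.
Qed.

End Listing.

Lemma ratio_bound p q cx cy g : 0 < p -> 0 < q -> cx = ln (1 / p) -> cy = ln (1 / q) ->
  g <= cx - cy -> p <= exp (- g) * q.
Proof.
  intros Hp Hq -> -> Hg.
  assert (E1 : exp (ln (1 / p)) = 1 / p) by (apply exp_ln; apply Rdiv_lt_0_compat; lra).
  assert (E2 : exp (ln (1 / q)) = 1 / q) by (apply exp_ln; apply Rdiv_lt_0_compat; lra).
  set (Z := exp (ln (1 / p) - ln (1 / q))).
  assert (EZ : Z * exp (ln (1 / q)) = exp (ln (1 / p))).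
  { unfold Z. rewrite -exp_plus. f_equal. lra. }
  rewrite E1 E2 in EZ.
  assert (HZ : Z = q / p) by (apply (Rmult_eq_reg_r (1 / q)); [rewrite EZ; field; lra|]; apply Rgt_not_eq; apply Rdiv_lt_0_compat; lra).
  assert (HE : exp g <= Z) by (unfold Z; destruct (Req_dec g (ln (1 / p) - ln (1 / q))) as [->|]; [lra|left; apply exp_increasing; lra]).
  assert (Eg : exp (- g) * exp g = 1) by (rewrite -exp_plus; replace (- g + g) with 0 by lra; apply exp_0).
  assert (Hpos : 0 < exp (- g)) by apply exp_pos.
  rewrite HZ in HE.
  assert (p * exp g <= q).
  { replace q with (p * (q / p)) by (field; lra). apply Rmult_le_compat_l; lra. }
  replace p with (exp (- g) * (p * exp g)) by (rewrite -Rmult_assoc (Rmult_comm (exp (-g)) p) Rmult_assoc Eg; lra).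
  apply Rmult_le_compat_l; lra.
Qed.

Section Core.
Variables TX TY : countType.
Variable PX : TX -> R.
Variable PY : TY -> R.
Variable ex : nat -> option TX.
Variable ey : nat -> option TY.
Hypothesis hPX : is_pmf PX.
Hypothesis hPY : is_pmf PY.
Hypothesis hex : sorted_listing PX ex.
Hypothesis hey : sorted_listing PY ey.
Variable gamma r : R.
Definition Bad := fun delta => (0 <= delta < 1)%R /\
       exists cx cy, cval PX ex delta cx /\ cval PY ey delta cy /\ (cx - cy < gamma)%R.
Hypothesis hm : outer_measure_le Bad r.

Local Notation a := (aa TX PX ex).
Local Notation p := (pp TX PX ex).
Local Notation b := (aa TY PY ey).
Local Notation q := (pp TY PY ey).
Local Notation HHx := (HH TX PX ex).

Definition ff t := HHx t - t.
Definition Dl j := ff (b (S j)) - ff (b j).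
Definition uu j := b (S j).
Definition vv j := if excluded_middle_informative
   (HHx (b j) < b (S j) /\ forall d, b (S j) <= d < HHx (b (S j)) -> Bad d)
   then HHx (b (S j)) else b (S j).

Lemma ff_nonneg t : t <= 1 -> 0 <= ff t.
Proof. intro. unfold ff. have := HH_ge _ _ _ hPX hex t. lra. Qed.

Lemma b_le1 j : b j <= 1. Proof. apply (aa_le1 _ _ _ hPY hey). Qed.
Lemma b_nonneg j : 0 <= b j. Proof. apply (aa_nonneg _ _ _ hPY hey). Qed.
Lemma b_mono i j : (i <= j)%coq_nat -> b i <= b j. Proof. apply (aa_mono _ _ _ hPY hey). Qed.

Lemma uv_ok j : 0 <= uu j /\ uu j <= vv j /\ vv j <= 1.
Proof.
  unfold uu, vv. have := b_nonneg (S j). have := b_le1 (S j).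
  have := HH_ge _ _ _ hPX hex (b (S j)). have := HH_le1 _ _ _ hPX hex (b (S j)).
  destruct (excluded_middle_informative _); cbn [is_left]; intros; lra.
Qed.

Lemma key_j j : Rmax 0 (Dl j) <= exp (- gamma) * q j + (vv j - uu j).
Proof.
  have Hq := pp_nonneg _ _ _ hPY hey j. have He := exp_pos (- gamma).
  have Huv := uv_ok j. have Hbj := b_le1 j. have HbS := b_le1 (S j).
  have HbjS := b_mono j (S j) ltac:(lia).
  have HqS : b (S j) = b j + q j by apply aa_S.
  assert (0 <= exp (- gamma) * q j) by (apply Rmult_le_pos; lra).
  destruct (Rlt_dec (HHx (b j)) (b (S j))) as [HB|HA].
  -
    assert (HD : Dl j <= ff (b (S j))) by (unfold Dl; have := ff_nonneg (b j) Hbj; lra).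
    have HfS := ff_nonneg (b (S j)) HbS.
    apply Rmax_lub; [lra|].
    unfold vv, uu. destruct (excluded_middle_informative _) as [[Hc0 Hall]|Hn]; cbn [is_left].
    + unfold ff in HD. lra.
    + assert (Hex : exists d, b (S j) <= d < HHx (b (S j)) /\ ~ Bad d).
      { apply NNPP. intro Hc. apply Hn. split; auto. intros d Hd. apply NNPP. intro Hb.
        apply Hc. exists d; auto. }
      destruct Hex as [d [Hd Hnb]].
      have HH1 := HH_le1 _ _ _ hPX hex (b (S j)).
      have Hb0 := b_nonneg (S j).
      destruct (aa_index _ _ _ hPX hex d ltac:(lra)) as [i Hi].
      destruct (aa_index _ _ _ hPY hey d ltac:(lra)) as [m Hm].
      have [_ Hpi] := aa_step_some _ _ _ hPX hex i ltac:(lra).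
      have [_ Hqm] := aa_step_some _ _ _ hPY hey m ltac:(lra).
      assert (Hg : gamma <= ln (1 / p i) - ln (1 / q m)).
      { apply Rnot_lt_le. intro Hlt. apply Hnb. split; [lra|].
        exists (ln (1 / p i)), (ln (1 / q m)). split; [apply cval_at; auto|].
        split; [apply cval_at; auto|auto]. }
      have Hpq := ratio_bound (p i) (q m) _ _ gamma Hpi Hqm erefl erefl Hg.
      assert (Hmj : (j <= m)%coq_nat).
      { destruct (Compare_dec.le_lt_dec j m) as [|Hl]; auto.
        have := b_mono (S m) (S j) ltac:(lia). lra. }
      have Hqmj := pp_noninc _ _ _ hPY hey j m Hmj.
      assert (Hai : a i < b (S j)).
      { apply Rnot_le_lt. intro Hc. have := HH_upper _ _ _ hPX hex (b (S j)) i Hc. lra. }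
      assert (HaS : HHx (b (S j)) <= a (S i)) by (apply (HH_upper _ _ _ hPX hex); lra).
      have HaSi : a (S i) = a i + p i by apply aa_S.
      assert (ff (b (S j)) <= p i) by (unfold ff; lra).
      assert (exp (- gamma) * q m <= exp (- gamma) * q j) by (apply Rmult_le_compat_l; lra).
      lra.
  -
    assert (HF : HHx (b (S j)) = HHx (b j)).
    { apply (HH_flat _ _ _ hPX hex); lra. }
    assert (Dl j <= 0) by (unfold Dl, ff; rewrite HF; lra).
    apply Rmax_lub; lra.
Qed.

Lemma vv_bad j : forall x, uu j <= x < vv j -> Bad x.
Proof.
  intros x Hx. unfold uu, vv in Hx. destruct (excluded_middle_informative _) as [[Hc0 Hall]|Hn]; cbn [is_left] in Hx.
  - apply Hall; auto.
  - lra.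
Qed.

Lemma vv_disj_lt k k' x : (k < k')%coq_nat -> uu k <= x < vv k -> uu k' <= x < vv k' -> False.
Proof.
  intros Hkk Hx Hx'. unfold uu, vv in Hx, Hx'.
  destruct (excluded_middle_informative _) as [[H1 Hz1]|]; cbn [is_left] in Hx; [|lra].
  destruct (excluded_middle_informative _) as [[H2 Hz2]|]; cbn [is_left] in Hx'; [|lra].
  have Hb := b_mono (S k) k' ltac:(lia).
  have := HH_mono _ _ _ hPX hex _ _ Hb. lra.
Qed.

Lemma key_sum M : psum (fun j => Rabs (Dl j)) M <= 2 * (exp (- gamma) + r).
Proof.
  assert (Habs : psum (fun j => Rabs (Dl j)) M = 2 * psum (fun j => Rmax 0 (Dl j)) M - psum Dl M).
  { rewrite -psum_scal -psum_minus. apply psum_ext. intros j _.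
    unfold Rmax. destruct (Rle_dec 0 (Dl j)); cbn [is_left].
    - rewrite Rabs_right; lra.
    - rewrite Rabs_left; lra. }
  assert (Htel : psum Dl M = ff (b M) - ff (b 0)).
  { unfold Dl. apply (psum_telesc (fun j => ff (b j))). }
  assert (Hf0 : ff (b 0) = 0).
  { unfold ff. rewrite (aa_0 _ _ _ hPY hey) (HH_0 _ _ _ hPX hex). lra. }
  have HfM := ff_nonneg (b M) (b_le1 M).
  assert (Hmeas : psum (fun j => vv j - uu j) M <= r).
  { apply (measure_bound Bad r uu vv M hm).
    - intros k _. apply uv_ok.
    - intros k _. apply vv_bad.
    - intros k k' _ _ x Hx Hx'. destruct (Nat.lt_trichotomy k k') as [Hl|[|Hl]]; auto.
      + exfalso; apply (vv_disj_lt k k' x); auto.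
      + exfalso; apply (vv_disj_lt k' k x); auto. }
  assert (Hsum : psum (fun j => Rmax 0 (Dl j)) M <= exp (- gamma) * b M + psum (fun j => vv j - uu j) M).
  { rewrite (aa_psum _ _ _ hPY hey) -psum_scal -psum_plus. apply psum_le. intros; apply key_j. }
  have HbM := b_le1 M. have He := exp_pos (- gamma).
  assert (exp (- gamma) * b M <= exp (- gamma)).
  { replace (exp (- gamma)) with (exp (- gamma) * 1) at 2 by lra. apply Rmult_le_compat_l; lra. }
  lra.
Qed.

End Core.

Section Glue.
Variables TX TY : countType.
Variable PX : TX -> R.
Variable PY : TY -> R.
Variable ex : nat -> option TX.
Variable ey : nat -> option TY.
Hypothesis hPX : is_pmf PX.
Hypothesis hPY : is_pmf PY.
Hypothesis hex : sorted_listing PX ex.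
Hypothesis hey : sorted_listing PY ey.

Local Notation a := (aa TX PX ex).
Local Notation p := (pp TX PX ex).
Local Notation b := (aa TY PY ey).
Local Notation q := (pp TY PY ey).
Local Notation HHx := (HH TX PX ex).

Definition phi_spec (x : TX) (y : TY) : Prop :=
  forall i, ex i = Some x -> exists j, ey j = Some y /\ b j <= a i < b (S j).

Lemma some_of_step j : b j < b (S j) -> exists y, ey j = Some y.
Proof.
  intro H. have [Hn _] := aa_step_some _ _ _ hPY hey j H.
  destruct (ey j) as [y|]; [exists y; auto|congruence].
Qed.

Lemma phi_exists x : exists y, phi_spec x y.
Proof.
  destruct (classic (exists i, ex i = Some x)) as [[i0 Hi0]|Hn].
  - have Hp := pp_pos _ _ _ hPX hex i0 ltac:(congruence).
    have HS : a (S i0) = a i0 + p i0 by apply aa_S.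
    have := aa_le1 _ _ _ hPX hex (S i0). have := aa_nonneg _ _ _ hPX hex i0. intros H0 H1.
    destruct (aa_index _ _ _ hPY hey (a i0) ltac:(lra)) as [j Hj].
    destruct (some_of_step j ltac:(lra)) as [y Hy].
    exists y. intros i Hi. destruct hex as [_ [Hinj _]].
    assert (i = i0) by (apply (Hinj i i0 x); auto). subst. exists j; auto.
  - destruct (aa_index _ _ _ hPY hey 0 ltac:(lra)) as [j Hj].
    destruct (some_of_step j ltac:(lra)) as [y Hy].
    exists y. intros i Hi. exfalso; apply Hn; exists i; auto.
Qed.

Variable phi : TX -> TY.
Hypothesis hphi : forall x, phi_spec x (phi x).

Definition fy (y : TY) (x : TX) : R := if phi x == y then PX x else 0.

Lemma fy_nonneg y x : 0 <= fy y x.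
Proof. unfold fy. destruct (phi x == y); [apply hPX|lra]. Qed.

Lemma fy_surj y x : 0 < fy y x -> exists i, ex i = Some x.
Proof.
  unfold fy. destruct (phi x == y); [|lra]. intro H. destruct hex as [_ [_ [_ [Hs _]]]]. apply Hs; auto.
Qed.

Lemma ex_inj : forall i j x, ex i = Some x -> ex j = Some x -> i = j.
Proof. destruct hex as [_ [Hinj _]]. auto. Qed.
Lemma ey_inj : forall i j x, ey i = Some x -> ey j = Some x -> i = j.
Proof. destruct hey as [_ [Hinj _]]. auto. Qed.

Lemma Q_exists y : exists qv, pushforward_is PX phi y qv /\
  (forall j, ey j = Some y -> qv = HHx (b (S j)) - HHx (b j)) /\
  ((forall j, ey j <> Some y) -> qv = 0).
Proof.
  unfold pushforward_is.
  destruct (classic (exists j, ey j = Some y)) as [[j0 Hj0]|Hn].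
  - exists (HHx (b (S j0)) - HHx (b j0)). split; [|split].
    + apply (csum_listing TX (fy y) ex (fy_nonneg y) ex_inj (fy_surj y)).
      apply (isum_ext (fun i => hterm TX PX ex (b (S j0)) i - hterm TX PX ex (b j0) i)).
      2: { apply isum_minus; apply (HH_sum _ _ _ hPX hex). }
      intro i. have Hbj := aa_mono _ _ _ hPY hey j0 (S j0) ltac:(lia).
      unfold lst, hterm, fy. destruct (ex i) as [x|] eqn:Ei.
      * have Hpx : p i = PX x by (unfold pp, lprob; rewrite Ei; auto).
        destruct (hphi x i Ei) as [j' [Hj' Hab]].
        destruct (phi x == y) eqn:E.
        -- move/eqP: E => E. rewrite E in Hj'. have Hjj := ey_inj _ _ _ Hj' Hj0. subst j'.
           destruct (Rlt_dec (a i) (b (S j0))); destruct (Rlt_dec (a i) (b j0)); cbn [is_left]; lra.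
        -- assert (Hne : j' <> j0).
           { intro Hc. subst j'. rewrite Hj0 in Hj'. injection Hj' as Hj'. rewrite Hj' in E.
             rewrite eqxx in E. discriminate. }
           destruct (Rlt_dec (a i) (b (S j0))); destruct (Rlt_dec (a i) (b j0)); cbn [is_left]; try lra.
           exfalso. apply Hne. apply (aa_index_uniq _ _ _ hPY hey (a i)); auto. lra.
      * have Hpx : p i = 0 by (unfold pp, lprob; rewrite Ei; auto).
        destruct (Rlt_dec (a i) (b (S j0))); destruct (Rlt_dec (a i) (b j0)); cbn [is_left]; lra.
    + intros j Hj. have := ey_inj _ _ _ Hj Hj0. intros ->. reflexivity.
    + intro Hc. exfalso. apply (Hc j0 Hj0).
  - exists 0. split; [|split].
    + apply (csum_listing TX (fy y) ex (fy_nonneg y) ex_inj (fy_surj y)).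
      apply (isum_ext (fun _ => 0)); [|apply isum_zero].
      intro i. unfold lst, fy. destruct (ex i) as [x|] eqn:Ei; auto.
      destruct (phi x == y) eqn:E; auto. move/eqP: E => E.
      destruct (hphi x i Ei) as [j' [Hj' _]]. exfalso; apply Hn. exists j'. rewrite -E. auto.
    + intros j Hj. exfalso; apply Hn; exists j; auto.
    + auto.
Qed.

Definition Qf (y : TY) : R := proj1_sig (constructive_indefinite_description _ (Q_exists y)).
Lemma Qf_spec y : pushforward_is PX phi y (Qf y) /\
  (forall j, ey j = Some y -> Qf y = HHx (b (S j)) - HHx (b j)) /\
  ((forall j, ey j <> Some y) -> Qf y = 0).
Proof. unfold Qf. apply proj2_sig. Qed.

Lemma core_dist gamma r : outer_measure_le (Bad TX TY PX PY ex ey gamma) r ->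
  exists d, var_dist_push_is PX PY phi d /\ d <= 2 * (exp (- gamma) + r).
Proof.
  intro hm.
  destruct (isum_exists (fun j => Rabs (Dl TX TY PX PY ex ey j)) (2 * (exp (- gamma) + r))) as [d [Hd Hdle]].
  - intro; apply Rabs_pos.
  - apply (key_sum _ _ _ _ _ _ hPX hPY hex hey gamma r hm).
  - exists d. split; auto. exists Qf. split; [intro y; apply Qf_spec|].
    unfold has_csum.
    apply (csum_listing TY (fun y => Rabs (PY y - Qf y)) ey); [intro; apply Rabs_pos|exact ey_inj| |].
    + intros y Hy. apply NNPP. intro Hn.
      assert (HQ : Qf y = 0) by (apply Qf_spec; intros j Hj; apply Hn; exists j; auto).
      assert (HP : PY y = 0).
      { destruct hPY as [Hnn _]. specialize (Hnn y). destruct Hnn as [Hlt|]; auto.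
        exfalso. apply Hn. destruct hey as [_ [_ [_ [Hs _]]]]. apply Hs; auto. }
      rewrite HQ HP in Hy. rewrite Rminus_0_r Rabs_R0 in Hy. lra.
    + apply (isum_ext (fun j => Rabs (Dl TX TY PX PY ex ey j))); [|exact Hd].
      intro j. unfold lst, Dl, ff. have HS : b (S j) = b j + q j by apply aa_S.
      destruct (ey j) as [y|] eqn:Ej.
      * have Hq : q j = PY y by (unfold pp, lprob; rewrite Ej; auto).
        rewrite ((proj1 (proj2 (Qf_spec y))) j Ej).
        rewrite -Rabs_Ropp. f_equal. lra.
      * have Hq : q j = 0 by (unfold pp, lprob; rewrite Ej; auto).
        rewrite Hq Rplus_0_r in HS. rewrite HS. replace (HHx (b j) - b j - (HHx (b j) - b j)) with 0 by lra.
        apply Rabs_R0.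
Qed.

End Glue.

Theorem theorem1
  (X Y : nat -> countType)
  (PX : forall n, X n -> R) (PY : forall n, Y n -> R)
  (hPX : forall n, is_pmf (PX n)) (hPY : forall n, is_pmf (PY n))
  (ex : forall n, nat -> option (X n)) (ey : forall n, nat -> option (Y n))
  (hex : forall n, sorted_listing (PX n) (ex n))
  (hey : forall n, sorted_listing (PY n) (ey n))
  (hyp : forall gamma : R,
     measure_tends_to_zero (fun n delta =>
       (0 <= delta < 1)%R /\
       exists cx cy, cval (PX n) (ex n) delta cx /\ cval (PY n) (ey n) delta cy
                     /\ (cx - cy < gamma)%R)) :
  approximating_source PX PY.
Proof.
  set (phi := fun n (x : X n) => proj1_sig (constructive_indefinite_description _
      (phi_exists (X n) (Y n) (PX n) (PY n) (ex n) (ey n) (hPX n) (hPY n) (hex n) (hey n) x))).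
  exists phi. intros eps Heps.
  set (gamma := - ln (eps / 8)).
  have Hg : exp (- gamma) = eps / 8.
  { unfold gamma. rewrite Ropp_involutive. apply exp_ln. lra. }
  destruct (hyp gamma (eps / 8) ltac:(lra)) as [N HN].
  exists N. intros n Hn.
  have Hm := HN n Hn.
  destruct (core_dist (X n) (Y n) (PX n) (PY n) (ex n) (ey n) (hPX n) (hPY n) (hex n) (hey n)
     (phi n) (fun x => proj2_sig (constructive_indefinite_description _ _)) gamma (eps / 8) Hm)
    as [d [Hd Hdle]].
  exists d. split; auto. rewrite Hg in Hdle. lra.
Qed.
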